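(* Let $A$ be an $F_n$-good $n\times n$ matrix and suppose $A_{i,j}=1$. If $i'\in\{i-1,i+1\}$ with $1\leq i'\leq n$ and $A_{i',k}=1$ for some column $k$, then $k\in\{j-1,j+1\}$.
   Context: $F_n$ is the set of vectors $\vec{x}=(x_1,\ldots,x_n)\in\mathbb{Z}_2^n$ with no $i$ such that $x_i=x_{i+1}=1$. An $n\times n$ matrix $A$ over $\mathbb{Z}_2$ is $F_n$-good if it is invertible and $A\vec{x}\in F_n$ for all $\vec{x}\in F_n$. $A_{i,j}$ denotes the entry of $A$ in row $i$, column $j$. *)

(* Defs.v *)
From mathcomp Require Import all_boot all_algebra.
Set Implicit Arguments. Unset Strict Implicit. Unset Printing Implicit Defensive.
Local Open Scope ring_scope.

(* Indices are 0-based ordinals 'I_n (paper uses 1..n). Z_2 is 'F_2. *)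

Definition inFn (n : nat) (x : 'cV['F_2]_n) : Prop :=
  forall i j : 'I_n, val j = (val i).+1 -> ~ (x i 0 = 1 /\ x j 0 = 1).

Definition Fn_good (n : nat) (A : 'M['F_2]_n) : Prop :=
  A \in unitmx /\ forall x : 'cV['F_2]_n, inFn x -> inFn (A *m x).

(* Main.v *)
Require Import Defs.
From mathcomp Require Import all_boot all_algebra.
From mathcomp Require Import zify.
From Stdlib Require Import Classical.
Import GRing.Theory.
Local Open Scope ring_scope.

Lemma F2_cases (x : 'F_2) : x = 0 \/ x = 1.
Proof. case: x => [[|[|m]] Hm]; [left; exact: val_inj|right; exact: val_inj|by []]. Qed.

Lemma F2_10 : (1 : 'F_2) <> 0.
Proof. by []. Qed.

Lemma inFn_adj n (y : 'cV['F_2]_n) (a b : 'I_n) :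
  inFn y -> y a 0 = 1 -> y b 0 = 1 ->
  (val b = (val a).+1 \/ val a = (val b).+1)%N -> False.
Proof.
move=> Hy Ha Hb [H|H].
- by apply: (Hy a b H).
- by apply: (Hy b a H).
Qed.

Lemma mul_delta n (A : 'M['F_2]_n) (j r : 'I_n) :
  (A *m (delta_mx j 0 : 'cV_n)) r 0 = A r j.
Proof. by rewrite -colE mxE. Qed.

Theorem lemma1 (n : nat) (A : 'M['F_2]_n) (i j i' k : 'I_n) :
  Fn_good A -> A i j = 1 ->
  (val i' = (val i).-1 /\ 0 < val i)%N \/ val i' = (val i).+1 ->
  A i' k = 1 ->
  val k = (val j).-1 /\ (0 < val j)%N \/ val k = (val j).+1.
Proof.
move=> [_ HA] Hij Hi' Hi'k.
have adj : (val i' = (val i).+1 \/ val i = (val i').+1)%N by lia.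
have Fe : forall l : 'I_n, inFn (delta_mx l 0 : 'cV['F_2]_n).
  move=> l a b Hab [Ha Hb]; move: Ha Hb; rewrite !mxE.
  rewrite !eqxx !andbT.
  case: eqP => [Ea|_]; case: eqP => [Eb|_] //=.
  by move=> _ _; subst; lia.
have Hi'j : A i' j = 0.
  case: (F2_cases (A i' j)) => // H; exfalso.
  apply: (@inFn_adj _ _ i i' (HA _ (Fe j))); rewrite ?mul_delta //.
have Hik : A i k = 0.
  case: (F2_cases (A i k)) => // H; exfalso.
  apply: (@inFn_adj _ _ i i' (HA _ (Fe k))); rewrite ?mul_delta //.
have Hkj : k != j by apply/eqP => E; move: Hi'k; rewrite E Hi'j.
apply: NNPP => Hng.
pose x : 'cV['F_2]_n := delta_mx j 0 + delta_mx k 0.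
have Fx : inFn x.
  move=> a b Hab [Ha Hb]; move: Ha Hb; rewrite !mxE.
  have aux : forall c : 'I_n, ((c == j)%:R + (c == k)%:R : 'F_2) = 1 ->
      (c == j) || (c == k).
    by move=> c; case: (c == j); case: (c == k).
  rewrite !eqxx !andbT.
  move=> /aux/orP Ha /aux/orP Hb.
  apply: Hng.
  case: Ha => /eqP Ha; case: Hb => /eqP Hb; subst; lia.
apply: (@inFn_adj _ _ i i' (HA _ Fx)) => //.
- by rewrite mulmxDr mxE !mul_delta Hij Hik addr0.
- by rewrite mulmxDr mxE !mul_delta Hi'j Hi'k add0r.
Qed.
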